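(* Let $1/q$ be a prime power, $\Bbbk=\mathbb{F}_{1/q}$, $\alpha=(\alpha_1,\dots,\alpha_k),\beta$ weak compositions of $n$, and $M\in\mathbb{N}^{k\times l}$ with row sums $\alpha$ and column sums $\beta$. Let $E\in\mathrm{Fl}_\alpha$ be the standard flag. Then the number of $F'\in\mathrm{Fl}_\beta$ such that $(E,F')$ has relative position $M$ is $$q^{-\sum_{1\le i'\le i\le k,\,1\le j<j'\le l}M_{i,j}M_{i',j'}}\frac{\prod_{i=1}^k[\alpha_i]_q!}{\prod_{i,j}[M_{i,j}]_q!}.$$
   Context: $\mathrm{Fl}_\alpha$ is the set of chains $0=F_0\subseteq\cdots\subseteq F_k=\Bbbk^n$ with $\dim F_i=\alpha_1+\cdots+\alpha_i$; $E_i=\langle e_1,\dots,e_{\alpha_1+\cdots+\alpha_i}\rangle$. For $F\in\mathrm{Fl}_\alpha$, $F'\in\mathrm{Fl}_\beta$, the relative position of $(F,F')$ is the unique $M\in\mathbb{N}^{k\times l}$ with $\dim(F_i\cap F'_j)=\sum_{i'\le i,j'\le j}M_{i',j'}$ for all $0\le i\le k$, $0\le j\le l$. $[m]_q!=\prod_{r=1}^m(1+q+\cdots+q^{r-1})$. Note the index set in the exponent allows $i'=i$. *)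

(* Defs.v *)
From HB Require Import structures.
From mathcomp Require Import all_boot all_order all_algebra all_field.
Set Implicit Arguments. Unset Strict Implicit. Unset Printing Implicit Defensive.
Import GRing.Theory Num.Theory.
Local Open Scope ring_scope.

(* partial sums a_1 + ... + a_i (0-based: sum over i' < i) *)
Definition psum (k : nat) (a : 'I_k -> nat) (i : nat) : nat :=
  (\sum_(i' < k | (i' < i)%N) a i')%N.

Definition qfact (R : comNzRingType) (q : R) (m : nat) : R :=
  \prod_(1 <= r < m.+1) \sum_(s < r) q ^+ s.

(* Subspaces of k^n are represented canonically by matrices A with <<A>> = A
   (row space).  A flag of type b is a chain F_0 <= ... <= F_l of such
   subspaces with dim F_j = b_1 + ... + b_j. *)
Definition is_flag (F : finFieldType) (n l : nat) (b : 'I_l -> nat)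
  (Fl : {ffun 'I_l.+1 -> 'M[F]_n}) : bool :=
  [forall j : 'I_l.+1, ((<<Fl j>>)%MS == Fl j) && (\rank (Fl j) == psum b j)]
  && [forall j : 'I_l, (Fl (inord j) <= Fl (inord j.+1))%MS].

Definition std_flag (F : finFieldType) (n k : nat) (a : 'I_k -> nat)
  (i : 'I_k.+1) : 'M[F]_n := pid_mx (psum a i).

Definition has_relpos (F : finFieldType) (n k l : nat)
  (E : 'I_k.+1 -> 'M[F]_n) (Fl : {ffun 'I_l.+1 -> 'M[F]_n})
  (M : 'M[nat]_(k, l)) : bool :=
  [forall i : 'I_k.+1, forall j : 'I_l.+1,
     \rank (E i :&: Fl j)%MS ==
     (\sum_(i' < k | (i' < i)%N) \sum_(j' < l | (j' < j)%N) M i' j')%N].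

(* Main.v *)
Require Import Defs.
From HB Require Import structures.
From mathcomp Require Import all_boot all_order all_algebra all_field.
From mathcomp Require Import zify ring lra.
Set Implicit Arguments. Unset Strict Implicit. Unset Printing Implicit Defensive.
Import GRing.Theory Num.Theory.
Local Open Scope ring_scope.

Section Lin.
Variable F : finFieldType.
Variable n : nat.
Local Notation Q := (#|F|%:R : rat).

Definition g (w e r : nat) : rat := \prod_(t < r) (Q ^+ w - Q ^+ (e + t)).

Lemma card_subrV (A : 'M[F]_n) :
  #|[pred v : 'rV[F]_n | (v <= A)%MS]| = (#|F| ^ \rank A)%N.
Proof.
transitivity #|[set u *m row_base A | u in 'rV[F]_(\rank A)]|.
  apply: eq_card => v; rewrite inE; apply/idP/imsetP.
    rewrite -(eq_row_base A) => /submxP [u ->]; by exists u.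
  by move=> [u _ ->]; apply: submx_trans (submxMl u _) _; rewrite eq_row_base.
rewrite card_imset ?card_mx ?mul1n ?card_ord //.
have [B AB1] := row_freeP (row_base_free A); apply: can_inj (mulmx^~ B) _ => v.
by rewrite -mulmxA AB1 mulmx1.
Qed.

Lemma rank_adds_row (A : 'M[F]_n) (v : 'rV[F]_n) :
  \rank (A + v)%MS = (\rank A + ~~ (v <= A)%MS)%N.
Proof.
have [vA|nvA] := boolP (v <= A)%MS.
  by rewrite addn0; apply/eqmx_rank; apply/eqmxP; apply/addsmx_idPl.
apply/eqP; rewrite eqn_leq; apply/andP; split.
  have := mxrank_adds_leqif A v; move=> [H _]; apply: leq_trans H _.
  by rewrite leq_add2l rank_leq_row.
rewrite addn1 ltn_neqAle (mxrank_leqif_sup (addsmxSl A v)).2 mxrankS ?addsmxSl //.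
by rewrite andbT addsmx_sub negb_and nvA orbT.
Qed.

Lemma rank_adds_le (E : 'M[F]_n) r (Y : 'M[F]_(r, n)) :
  (\rank (E + Y)%MS <= \rank E + r)%N.
Proof.
have [H _] := mxrank_adds_leqif E Y; apply: leq_trans H _.
by rewrite leq_add2l rank_leq_row.
Qed.

Lemma charX (E W : 'M[F]_n) r (v : 'rV[F]_n) (Y : 'M[F]_(r, n)) :
  ((col_mx v Y <= W)%MS && (\rank (E + col_mx v Y)%MS == \rank E + r.+1)%N) =
  [&& (Y <= W)%MS, (\rank (E + Y)%MS == \rank E + r)%N, (v <= W)%MS & ~~ (v <= E + Y)%MS].
Proof.
have -> : \rank (E + col_mx v Y)%MS = \rank ((E + Y) + v)%MS.
  have /andP [sv sY] : ((v <= col_mx v Y) && (Y <= col_mx v Y))%MS.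
    by rewrite -col_mx_sub submx_refl.
  apply/eqmx_rank/andP; split.
    rewrite addsmx_sub col_mx_sub addsmxSr /=.
    rewrite (submx_trans (addsmxSl E Y)) ?addsmxSl //=.
    by rewrite (submx_trans (addsmxSr E Y)) ?addsmxSl.
  rewrite !addsmx_sub addsmxSl /=.
  by rewrite !(submx_trans _ (addsmxSr E (col_mx v Y))).
rewrite rank_adds_row col_mx_sub.
have := rank_adds_le E Y.
case: (v <= E + Y)%MS; case: (v <= W)%MS; case: (Y <= W)%MS => /=; try lia.
all: move=> H; apply/idP/idP; lia.
Qed.

Lemma card_diff_sub (A B : 'M[F]_n) : (B <= A)%MS ->
  #|[pred v : 'rV[F]_n | (v <= A)%MS && ~~ (v <= B)%MS]| =
  (#|F| ^ \rank A - #|F| ^ \rank B)%N.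
Proof.
move=> sBA; rewrite -!card_subrV.
have := cardID [pred v : 'rV[F]_n | (v <= B)%MS] [pred v : 'rV[F]_n | (v <= A)%MS].
have -> : #|[predI [pred v : 'rV[F]_n | (v <= A)%MS] & [pred v : 'rV[F]_n | (v <= B)%MS]]|
  = #|[pred v : 'rV[F]_n | (v <= B)%MS]|.
  apply: eq_card => v; rewrite !inE; apply/andP/idP => [[]//|vB].
  by rewrite (submx_trans vB sBA).
have -> : #|[predD [pred v : 'rV[F]_n | (v <= A)%MS] & [pred v : 'rV[F]_n | (v <= B)%MS]]|
  = #|[pred v : 'rV[F]_n | (v <= A)%MS && ~~ (v <= B)%MS]|.
  by apply: eq_card => v; rewrite !inE andbC.
move=> <-; rewrite addKn; reflexivity.
Qed.

Lemma count_tuples (E W : 'M[F]_n) r : (E <= W)%MS ->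
  (#|[pred X : 'M[F]_(r, n) | (X <= W)%MS && (\rank (E + X)%MS == \rank E + r)%N]|%:R
   = g (\rank W) (\rank E) r).
Proof.
move=> sEW; elim: r => [|r IH].
  rewrite /g big_ord0 (@eq_card1 _ (0 : 'M_(0, n))) // => X.
  by rewrite !inE flatmx0 eqxx sub0mx addn0; apply/eqP/eqmx_rank/eqmxP/addsmx0.
rewrite /g big_ord_recr /= -/(g _ _ _) -IH -sum1_card.

rewrite (partition_big (@dsubmx F 1 r n) [pred Y : 'M[F]_(r, n) | (Y <= W)%MS && (\rank (E + Y)%MS == \rank E + r)%N]) /=; last first.
  move=> X; rewrite !inE -{1 2}(vsubmxK X) charX.
  by case/and4P => -> -> _ _.
have [le|gt] := leqP (\rank E + r) (\rank W); last first.
  have P0 : forall Y : 'M[F]_(r, n), ((Y <= W)%MS && (\rank (E + Y)%MS == \rank E + r)%N) = false.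
    move=> Y; apply/negP => /andP [sYW /eqP rY].
    have : (\rank (E + Y)%MS <= \rank W)%N by rewrite mxrankS // addsmx_sub sEW.
    lia.
  rewrite big_pred0 // (eq_card0 (A := [pred Y : 'M[F]_(r, n) | (Y <= W)%MS && (\rank (E + Y)%MS == \rank E + r)%N])) ?mul0r //.
rewrite (eq_bigr (fun _ => (#|F| ^ \rank W - #|F| ^ (\rank E + r))%N)); last first.
  move=> Y /andP [sYW /eqP rY].
  rewrite (reindex (fun v : 'rV[F]_n => col_mx v Y)) /=; last first.
    exists usubmx => [v _ | X /andP [_ /eqP <-]]; first by rewrite col_mxKu.
    by rewrite vsubmxK.
  rewrite sum1_card -rY -card_diff_sub; last by rewrite addsmx_sub sEW.
  apply: eq_card => v; rewrite unfold_in /= inE charX col_mxKd eqxx andbT sYW rY eqxx /=. done.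
rewrite (@sum_nat_const _ [pred Y : 'M[F]_(r, n) | (Y <= W)%MS && (\rank (E + Y)%MS == \rank E + r)%N]).
have F0 : (0 < #|F|)%N by apply: ltnW (card_finNzRing_gt1 _).
rewrite natrM natrB; last by rewrite (leq_pexp2l F0).
rewrite !natrX.
reflexivity.
Qed.

Lemma rank_capl_eq (A B C : 'M[F]_n) : (A == B)%MS ->
  \rank (A :&: C)%MS = \rank (B :&: C)%MS.
Proof.
move=> /andP [sAB sBA]; apply/eqmx_rank/andP; split; apply: capmxS => //.
Qed.

Lemma gen_eq (A : 'M[F]_n) : (<<A>> == A)%MS.
Proof. by apply/eqmxP; apply: genmxE. Qed.

Lemma rank_facts (V' E : 'M[F]_n) r (X : 'M[F]_(r, n)) : (V' <= E)%MS ->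
  \rank (E + X)%MS = (\rank E + r)%N ->
  \rank (V' + X)%MS = (\rank V' + r)%N.
Proof.
move=> sVE rEX.
have h1 := mxrank_sum_cap V' X; have h2 := mxrank_sum_cap E X.
have h3 : (\rank (V' :&: X)%MS <= \rank (E :&: X)%MS)%N by rewrite mxrankS // capmxS.
have h4 := rank_leq_row X.
lia.
Qed.

Definition Vset (V' E W : 'M[F]_n) r :=
  [pred V : 'M[F]_n | [&& <<V>>%MS == V, \rank V == (\rank V' + r)%N, (V' <= V)%MS,
      (V <= W)%MS & \rank (V :&: E)%MS == \rank V']].

Lemma count_ext (V' E W : 'M[F]_n) r : (V' <= E)%MS -> (E <= W)%MS ->
  #|Vset V' E W r|%:R * g (\rank V' + r) (\rank V') r = g (\rank W) (\rank E) r.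
Proof.
move=> sVE sEW.
rewrite -count_tuples //; symmetry; rewrite -sum1_card.
rewrite (partition_big (fun X : 'M[F]_(r, n) => <<(V' + X)%MS>>%MS) (Vset V' E W r)) /=; last first.
  move=> X /andP [sXW /eqP rEX]; rewrite /Vset. rewrite genmx_id eqxx /= mxrank_gen.
  rewrite (rank_facts sVE rEX) eqxx /= !genmxE addsmxSl addsmx_sub sXW (submx_trans sVE sEW) /=.
  rewrite (rank_capl_eq _ (gen_eq _)).
  have h1 := mxrank_sum_cap (V' + X)%MS E.
  have h2 : \rank (V' + X + E)%MS = \rank (E + X)%MS.
    apply/eqmx_rank/andP; split.
      by rewrite !addsmx_sub addsmxSl addsmxSr (submx_trans sVE) ?addsmxSl.
    by rewrite !addsmx_sub addsmxSr (submx_trans (addsmxSr V' X)) ?addsmxSl.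
  rewrite (rank_facts sVE rEX) h2 rEX in h1; apply/eqP; lia.
rewrite natr_sum.
rewrite (eq_bigr (fun _ => g (\rank V' + r) (\rank V') r)); last first.
  move=> V /and5P [/eqP cV /eqP rV sV'V sVW /eqP rVE].
  rewrite sum1_card -rV -count_tuples //.
  congr (_ %:R); apply: eq_card => X; rewrite unfold_in /= !inE.
  apply/idP/idP.
    move=> /andP [/andP [sXW /eqP rEX] /eqP HV].
    rewrite (rank_facts sVE rEX) eqxx andbT -HV genmxE addsmxSr //.
  move=> /andP [sXV /eqP rVX].
  have sAV : (V' + X <= V)%MS by rewrite addsmx_sub sV'V sXV.
  have eAV : (V' + X == V)%MS by rewrite -(mxrank_leqif_eq sAV).2 rVX rV.
  have -> : <<(V' + X)%MS>>%MS = V by rewrite -[RHS]cV; apply/eq_genmx/eqmxP.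
  rewrite eqxx andbT (submx_trans sXV sVW) /=.
  have h1 := mxrank_sum_cap E V.
  have h2 : \rank (E + X)%MS = \rank (E + V)%MS.
    apply/eqmx_rank/andP; split.
      by rewrite addsmxS.
    move/andP: eAV => [_ sVA].
    by rewrite addsmx_sub addsmxSl (submx_trans sVA) // addsmx_sub (submx_trans sVE) ?addsmxSl ?addsmxSr.
  rewrite capmxC rVE rV in h1; rewrite h2; apply/eqP; lia.
rewrite sumr_const mulr_natl; reflexivity.
Qed.

Lemma Q_gt1 : 1 < Q.
Proof. by rewrite ltr1n card_finNzRing_gt1. Qed.

Lemma g_neq0 d r : g (d + r) d r != 0.
Proof.
apply/prodf_neq0 => t _; rewrite subr_eq0; apply/negP => /eqP H.
have : Q ^+ (d + t) < Q ^+ (d + r) by rewrite ltr_eXn2l ?Q_gt1 // ltn_add2l ltn_ord.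
by rewrite H Order.POrderTheory.ltxx.
Qed.

Lemma forall_ordP k (P : nat -> bool) :
  reflect (forall i, (i <= k)%N -> P i) [forall i : 'I_k.+1, P i].
Proof.
apply: (iffP forallP) => H i; last exact: H i (ltn_ord i).
by move=> hi; exact: (H (Ordinal (hi : (i < k.+1)%N))).
Qed.

Lemma chain_le (E : nat -> 'M[F]_n) k : (forall i, (i < k)%N -> (E i <= E i.+1)%MS) ->
  forall i j, (i <= j)%N -> (j <= k)%N -> (E i <= E j)%MS.
Proof.
move=> H i j ij; elim: j ij => [|j IH]; first by rewrite leqn0 => /eqP ->.
rewrite leq_eqVlt => /orP [/eqP -> //|ij] jk.
by apply: submx_trans (IH ij (ltnW jk)) (H j jk).
Qed.

Lemma rank_cap_sub (A B : 'M[F]_n) : (B <= A)%MS -> \rank (A :&: B)%MS = \rank B.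
Proof. by move/capmx_idPr => ->. Qed.

Lemma eq_cap_sub (A B : 'M[F]_n) : (A <= B)%MS -> (A :&: B == A)%MS.
Proof. by move/capmx_idPl => H; apply/eqmxP. Qed.

Lemma cellP (E : nat -> 'M[F]_n) (d : nat -> nat) k (V : 'M[F]_n) :
  reflect (forall i, (i <= k)%N -> \rank (E i :&: V)%MS = d i)
    [forall i : 'I_k.+1, \rank (E i :&: V)%MS == d i].
Proof.
apply: (iffP forallP) => H i; last by apply/eqP; exact: H i (ltn_ord i).
by move=> hi; apply/eqP; exact: (H (Ordinal (hi : (i < k.+1)%N))).
Qed.

Definition cellset (E : nat -> 'M[F]_n) (d : nat -> nat) (k : nat) :=
  [pred V : 'M[F]_n | [&& <<V>>%MS == V, (V <= E k)%MS &
      [forall i : 'I_k.+1, \rank (E i :&: V)%MS == d i]]].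

Lemma count_cell (E : nat -> 'M[F]_n) (d : nat -> nat) k :
  \rank (E 0) = 0%N -> d 0 = 0%N ->
  (forall i, (i < k)%N -> (E i <= E i.+1)%MS) -> (forall i, (i < k)%N -> (d i <= d i.+1)%N) ->
  #|cellset E d k|%:R = \prod_(i < k)
     (g (\rank (E i.+1)) (\rank (E i)) (d i.+1 - d i) / g (d i.+1) (d i) (d i.+1 - d i)).
Proof.
move=> rE0 d0; elim: k => [|k IH] HE Hd.
  rewrite big_ord0 (@eq_card1 _ 0) // => V; rewrite unfold_in /=.
  apply/idP/idP => [/and3P [/eqP cV sVE _]|].
    by rewrite inE -mxrank_eq0 -leqn0 -rE0 mxrankS.
  move=> /eqP ->; rewrite genmx0 eqxx sub0mx !andTb; apply/cellP => i; rewrite leqn0 => /eqP ->.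
  by rewrite capmx0 mxrank0 d0.
have HE' : forall i, (i < k)%N -> (E i <= E i.+1)%MS by move=> i ik; apply: HE; apply: ltnW.
have Hd' : forall i, (i < k)%N -> (d i <= d i.+1)%N by move=> i ik; apply: Hd; apply: ltnW.
have Hch := chain_le HE.
rewrite big_ord_recr /= -(IH HE' Hd') -sum1_card.
rewrite (partition_big (fun V => <<(E k :&: V)%MS>>%MS) (cellset E d k)) /=; last first.
  move=> V; rewrite unfold_in /= => /and3P [cV sVE /cellP hV].
  rewrite genmx_id eqxx genmxE capmxSl /=.
  apply/cellP => i ik; rewrite capmxC (rank_capl_eq _ (gen_eq _)) capmxC.
  rewrite capmxA (rank_capl_eq _ (eq_cap_sub _)); last exact: Hch.
  exact: hV (leqW ik).
set r := (d k.+1 - d k)%N.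
rewrite natr_sum (eq_bigr (fun _ => g (\rank (E k.+1)) (\rank (E k)) r / g (d k.+1) (d k) r)); last first.
  move=> V' /and3P [/eqP cV' sV'E /cellP hV'].
  have rV' : \rank V' = d k by rewrite -(hV' k (leqnn k)) rank_cap_sub.
  have dkr : (d k + r)%N = d k.+1 by rewrite /r subnKC // Hd.
  rewrite -(count_ext _ sV'E (HE k (ltnSn k))) rV' dkr mulfK; last by rewrite -dkr g_neq0.
  rewrite sum1_card; congr (_ %:R); apply: eq_card => V.
  rewrite unfold_in /= unfold_in /= /Vset inE.
  apply/idP/idP.
    move=> /andP [/and3P [cV sVE /cellP hV] /eqP HV].
    have rV : \rank V = d k.+1 by rewrite -(hV k.+1 (leqnn _)) rank_cap_sub.
    rewrite cV rV' rV dkr eqxx sVE -HV genmxE capmxSr /= capmxC.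
    by rewrite (hV k (leqnSn _)).
  move=> /and5P [cV /eqP rV sV'V sVW /eqP rVE].
  have eV' : (V' == E k :&: V)%MS.
    have sub : (V' <= E k :&: V)%MS by rewrite sub_capmx sV'E.
    by rewrite -(mxrank_leqif_eq sub).2 capmxC rVE.
  rewrite cV sVW !andTb; apply/andP; split.
    apply/cellP => i; rewrite leq_eqVlt => /orP [/eqP ->|ik].
      by rewrite rank_cap_sub // rV rV' dkr.
    have -> : \rank (E i :&: V)%MS = \rank (E i :&: V')%MS.
      rewrite [in RHS]capmxC (rank_capl_eq _ eV') [in RHS]capmxC [in RHS]capmxA.
      by rewrite [in RHS](rank_capl_eq _ (eq_cap_sub _)) // Hch.
    exact: hV' i ik.
  rewrite -[X in _ == X]cV'; apply/eqP/eq_genmx; apply: eqmx_sym; apply/eqmxP; exact: eV'.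
rewrite sumr_const mulr_natl; reflexivity.
Qed.

End Lin.

Import Order.TTheory.

Section Alg.
Variable F : finFieldType.
Local Notation Q := (#|F|%:R : rat).
Local Notation q := (Q^-1).
Local Notation g := (@g F).

Lemma Q_neq0 : Q != 0.
Proof. by rewrite gt_eqF // (lt_trans ltr01 (Q_gt1 F)). Qed.

Lemma q_gt0 : 0 < q.
Proof. by rewrite invr_gt0 (lt_trans ltr01 (Q_gt1 F)). Qed.

Lemma q_neq1 : 1 - q != 0.
Proof.
rewrite subr_eq0; apply/negP => /eqP H.
have := Q_gt1 F; by rewrite -[Q]invrK -H invr1 Order.POrderTheory.ltxx.
Qed.

Definition phi (m : nat) : rat := \prod_(1 <= s < m.+1) (1 - q ^+ s).

Lemma geom r : (\sum_(s < r) q ^+ s) * (1 - q) = 1 - q ^+ r.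
Proof.
elim: r => [|r IH]; first by rewrite big_ord0 mul0r expr0 subrr.
rewrite big_ord_recr /= mulrDl IH exprS; ring.
Qed.

Lemma qfact_phi m : qfact q m * (1 - q) ^+ m = phi m.
Proof.
elim: m => [|m IH]; first by rewrite /qfact /phi !big_geq // expr0 mulr1.
rewrite /qfact /phi big_nat_recr // [in RHS]big_nat_recr //= -/(qfact q m) -/(phi m) -IH.
rewrite exprS -geom; ring.
Qed.

Lemma qfact_gt0 m : 0 < qfact q m.
Proof.
elim: m => [|m IH]; first by rewrite /qfact big_geq.
rewrite /qfact big_nat_recr //= -/(qfact q m) mulr_gt0 // big_ord_recl expr0.
apply: (lt_le_trans ltr01); rewrite lerDl; apply: sumr_ge0 => i _.
by apply: exprn_ge0; apply: ltW q_gt0.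
Qed.

Lemma qfact_neq0 m : qfact q m != 0.
Proof. by rewrite gt_eqF // qfact_gt0. Qed.

Lemma phi_neq0 m : phi m != 0.
Proof. by rewrite -qfact_phi mulf_neq0 ?qfact_neq0 // expf_neq0 // q_neq1. Qed.

Lemma gshift e a r : g (e + a) e r = Q ^+ (e * r) * g a 0 r.
Proof.
have -> : Q ^+ (e * r) = \prod_(t < r) Q ^+ e by rewrite prodr_const card_ord exprM.
rewrite /g -big_split /=; apply: eq_bigr => t _; rewrite !exprD mulrBr.
reflexivity.
Qed.

Lemma gS a r : g a.+1 0 r.+1 = (Q ^+ a.+1 - 1) * Q ^+ r * g a 0 r.
Proof.
rewrite /g big_ord_recl /= add0n expr0 -mulrA; congr (_ * _).
have -> : Q ^+ r = \prod_(t < r) Q by rewrite prodr_const card_ord.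
rewrite -big_split /=; apply: eq_bigr => t _.
rewrite /bump leq0n add1n !add0n !exprS mulrBr; reflexivity.
Qed.

Lemma G0 r m : g (r + m) 0 r * phi m = Q ^+ (r * (r + m)) * phi (r + m).
Proof.
elim: r => [|r IH].
  by rewrite /g big_ord0 mul1r.
rewrite addSn gS -mulrA IH.
rewrite /phi [in RHS]big_nat_recr //= -/(phi (r + m)).
have -> : ((r.+1) * (r + m).+1 = (r + m).+1 + r + r * (r + m))%N by ring.
rewrite !exprD exprVn.
have hQ : Q ^+ (r + m).+1 != 0 by rewrite expf_neq0 // Q_neq0.
field.
exact: hQ.
Qed.

Lemma gratio d c r m :
  g (d + c + (r + m)) (d + c) r / g (d + r) d r =
  Q ^+ (r * (c + m)) * (qfact q (r + m) / (qfact q r * qfact q m)).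
Proof.
rewrite !gshift.
have h1 : g (r + m) 0 r = Q ^+ (r * (r + m)) * phi (r + m) / phi m.
  by rewrite -G0 mulfK // phi_neq0.
have h2 : g r 0 r = Q ^+ (r * r) * phi r.
  have := G0 r 0; rewrite addn0 /phi big_geq // mulr1 => ->.
  by rewrite -/(phi r).
rewrite h1 h2 -!qfact_phi.
rewrite (mulnDl d c r) (mulnDr r r m) (mulnDr r c m) (mulnC c r) !exprD.
have h3 : Q ^+ (d * r) != 0 by rewrite expf_neq0 // Q_neq0.
have h4 : Q ^+ (r * r) != 0 by rewrite expf_neq0 // Q_neq0.
have h5 : (1 - q) ^+ r != 0 by rewrite expf_neq0 // q_neq1.
have h6 : (1 - q) ^+ m != 0 by rewrite expf_neq0 // q_neq1.
have h7 := qfact_neq0 r; have h8 := qfact_neq0 m.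
field.
by rewrite h3 h4 h5 h6 h7 h8.
Qed.

Definition Sf k l (f : 'I_k -> 'I_l -> nat) : nat :=
  (\sum_(i < k) \sum_(i' < k | (i' <= i)%N)
     \sum_(j < l) \sum_(j' < l | (j < j')%N) f i j * f i' j')%N.

Lemma Sf_ext k l (f h : 'I_k -> 'I_l -> nat) : (forall i j, f i j = h i j) -> Sf f = Sf h.
Proof.
move=> H; apply: eq_bigr => i _; apply: eq_bigr => i' _; apply: eq_bigr => j _.
by apply: eq_bigr => j' _; rewrite !H.
Qed.

Lemma sum_filt_recr l (j0 : nat) (f : 'I_l.+1 -> nat) :
  (\sum_(j' < l.+1 | (j0 < j')%N) f j' =
   \sum_(j' < l | (j0 < j')%N) f (widen_ord (leqnSn l) j') + (j0 < l) * f ord_max)%N.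
Proof.
rewrite big_mkcond big_ord_recr /= -big_mkcond /=; congr (_ + _)%N.
by case: (j0 < l)%N; rewrite ?mul1n ?mul0n.
Qed.

Lemma psumS k (i : 'I_k) (f : 'I_k -> nat) :
  (\sum_(i' < k | (i' < i.+1)%N) f i' = \sum_(i' < k | (i' < i)%N) f i' + f i)%N.
Proof.
rewrite (bigD1 i) /= ?ltnSn // addnC; congr (_ + _)%N.
apply: eq_bigl => i'; rewrite ltnS ltn_neqAle andbC; reflexivity.
Qed.

Lemma expo_step k l (f : 'I_k -> 'I_l.+1 -> nat) :
  Sf f = (Sf (fun i j => f i (widen_ord (leqnSn l) j)) +
    \sum_(i < k) (\sum_(j < l) f i (widen_ord (leqnSn l) j)) *
       (\sum_(i' < k | (i' < i)%N) f i' ord_max + f i ord_max))%N.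
Proof.
rewrite /Sf -big_split /=; apply: eq_bigr => i _.
rewrite -psumS big_distrr /= -big_split /=.
apply: eq_bigr => i' _.
rewrite big_ord_recr /= [X in (_ + X)%N]big_pred0; last first.
  by move=> j'; rewrite ltnNge -ltnS ltn_ord.
rewrite addn0 big_distrl /= -big_split /=; apply: eq_bigr => j _.
by rewrite sum_filt_recr ltn_ord mul1n.
Qed.

Definition formula k l (alpha : 'I_k -> nat) (M : 'M[nat]_(k, l)) : rat :=
  Q ^+ (\sum_(i < k) \sum_(i' < k | (i' <= i)%N)
            \sum_(j < l) \sum_(j' < l | (j < j')%N) M i j * M i' j')%N
    * (\prod_(i < k) qfact q (alpha i))
    / (\prod_(i < k) \prod_(j < l) qfact q (M i j)).

Lemma formula_step k l (alpha : 'I_k -> nat) (M : 'M[nat]_(k, l.+1)) :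
  (forall i, \sum_(j < l.+1) M i j = alpha i)%N ->
  let M' := \matrix_(i < k, j < l) M i (widen_ord (leqnSn l) j) in
  let a' := fun i : 'I_k => (\sum_(j < l) M' i j)%N in
  let d := fun x : nat => (\sum_(i' < k | (i' < x)%N) a' i')%N in
  let e := fun x : nat => (\sum_(i' < k | (i' < x)%N) alpha i')%N in
  formula alpha M = (\prod_(i < k)
      (g (e i.+1) (e i) (d i.+1 - d i) / g (d i.+1) (d i) (d i.+1 - d i)))
    * formula a' M'.
Proof.
move=> hrow M' a' d e.
set m := fun i : 'I_k => M i ord_max.
set c := fun x : nat => (\sum_(i' < k | (i' < x)%N) m i')%N.
have ha : forall i, alpha i = (a' i + m i)%N.
  move=> i; rewrite -hrow big_ord_recr /=; congr (_ + _)%N.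
  by apply: eq_bigr => j _; rewrite /M' mxE.
have he : forall x, e x = (d x + c x)%N.
  by move=> x; rewrite /e /d /c -big_split /=; apply: eq_bigr => i _; rewrite ha.
rewrite (eq_bigr (fun i => Q ^+ (a' i * (c i + m i)) *
   (qfact q (alpha i) / (qfact q (a' i) * qfact q (m i))))); last first.
  move=> i _.
  have hd : d i.+1 = (d i + a' i)%N by rewrite /d psumS.
  have hc : c i.+1 = (c i + m i)%N by rewrite /c psumS.
  rewrite (he i.+1) (he i) hd hc addKn (ha i).
  have -> : (d i + a' i + (c i + m i) = d i + c i + (a' i + m i))%N by ring.
  exact: gratio.
rewrite big_split /= prodrXr prodf_div big_split /=.
rewrite /formula.
set S1 := (\sum_(i < k) _)%N.
set S2 := (\sum_(i < k) _)%N.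
have hS : S1 = (S2 + \sum_(i < k) a' i * (c i + m i))%N.
  rewrite /S1 /S2.
  have -> : forall (f : 'I_k -> 'I_l.+1 -> nat), (\sum_(i < k) \sum_(i' < k | (i' <= i)%N)
           \sum_(j < l.+1) \sum_(j' < l.+1 | (j < j')%N) f i j * f i' j')%N = Sf f by [].
  have -> : (\sum_(i < k) \sum_(i' < k | (i' <= i)%N)
           \sum_(j < l) \sum_(j' < l | (j < j')%N) M' i j * M' i' j')%N
       = Sf (fun i j => M i (widen_ord (leqnSn l) j)).
    by apply: Sf_ext => i j; rewrite /M' mxE.
  rewrite (expo_step (fun i j => M i j)); congr (_ + _)%N.
  apply: eq_bigr => i _; congr (_ * _)%N.
  by apply: eq_bigr => j _; rewrite /M' mxE.
have hP : \prod_(i < k) \prod_(j < l.+1) qfact q (M i j) =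
    (\prod_(i < k) \prod_(j < l) qfact q (M' i j)) * \prod_(i < k) qfact q (m i).
  rewrite -big_split /=; apply: eq_bigr => i _; rewrite big_ord_recr /=; congr (_ * _).
  by apply: eq_bigr => j _; rewrite /M' mxE.
rewrite hS hP exprD.
have h1 : \prod_(i < k) qfact q (a' i) != 0 by apply/prodf_neq0 => i _; exact: qfact_neq0.
have h2 : \prod_(i < k) qfact q (m i) != 0 by apply/prodf_neq0 => i _; exact: qfact_neq0.
have h3 : \prod_(i < k) \prod_(j < l) qfact q (M' i j) != 0.
  by apply/prodf_neq0 => i _; apply/prodf_neq0 => j _; exact: qfact_neq0.
have key : forall A B X Y Z W : rat, Y != 0 -> Z != 0 -> W != 0 ->
    A * B * X / (W * Z) = B * (X / (Y * Z)) * (A * Y / W).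
  by move=> A B X Y Z W hY hZ hW; field; rewrite hY hZ hW.
exact: (key _ _ _ _ _ _ h1 h2 h3).
Qed.

End Alg.

Section Flags.
Variable F : finFieldType.
Variable n : nat.

Lemma flagP L (beta : 'I_L -> nat) (Fl : {ffun 'I_L.+1 -> 'M[F]_n}) :
  reflect ((forall j, (j <= L)%N -> <<Fl (inord j)>>%MS = Fl (inord j) /\
                    \rank (Fl (inord j)) = psum beta j) /\
           (forall j, (j < L)%N -> (Fl (inord j) <= Fl (inord j.+1))%MS))
          (is_flag beta Fl).
Proof.
apply: (iffP andP) => [[/forallP H1 /forallP H2]|[H1 H2]]; split.
- move=> j jL; have /andP [/eqP h1 /eqP h2] := H1 (inord j).
  by rewrite inordK ?ltnS in h2.
- by move=> j jL; exact: (H2 (Ordinal jL)).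
- apply/forallP => j; have [h1 h2] := H1 j (ltn_ord j).
  by rewrite inord_val in h1 h2; rewrite h1 h2 !eqxx.
- by apply/forallP => j; exact: H2 j (ltn_ord j).
Qed.

Definition rsum k L (M : 'M[nat]_(k, L)) (i j : nat) : nat :=
  (\sum_(i' < k | (i' < i)%N) \sum_(j' < L | (j' < j)%N) M i' j')%N.

Lemma relposP k L (E : 'I_k.+1 -> 'M[F]_n) (Fl : {ffun 'I_L.+1 -> 'M[F]_n})
  (M : 'M[nat]_(k, L)) :
  reflect (forall i j, (i <= k)%N -> (j <= L)%N ->
             \rank (E (inord i) :&: Fl (inord j))%MS = rsum M i j)
          (has_relpos E Fl M).
Proof.
apply: (iffP forallP) => [H i j ik jL|H i].
  have /forallP /(_ (inord j)) /eqP := H (inord i).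
  by rewrite /rsum !inordK ?ltnS.
apply/forallP => j; apply/eqP.
by have := H i j (ltn_ord i) (ltn_ord j); rewrite !inord_val.
Qed.

Lemma sum_widen l (f : 'I_l.+1 -> nat) j : (j <= l)%N ->
  (\sum_(j' < l.+1 | (j' < j)%N) f j' = \sum_(j' < l | (j' < j)%N) f (widen_ord (leqnSn l) j'))%N.
Proof.
move=> jl; rewrite big_mkcond big_ord_recr /= ltnNge jl addn0 -big_mkcond; reflexivity.
Qed.

Lemma sum_full L (f : 'I_L -> nat) :
  (\sum_(j' < L | (j' < L)%N) f j' = \sum_(j' < L) f j')%N.
Proof. by apply: eq_bigl => j; rewrite ltn_ord. Qed.

Lemma psum0 L (b : 'I_L -> nat) : psum b 0 = 0%N.
Proof. by rewrite /psum big_pred0. Qed.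

Lemma cap_rank_sub (A B : 'M[F]_n) : \rank (A :&: B)%MS = \rank B -> (B <= A)%MS.
Proof.
move=> h; have := (mxrank_leqif_sup (capmxSr A B)).2; rewrite h eqxx => /esym sB.
exact: submx_trans sB (capmxSl A B).
Qed.

Lemma canon_eq (A B : 'M[F]_n) : <<A>>%MS = A -> <<B>>%MS = B -> (A == B)%MS -> A = B.
Proof. by move=> cA cB eAB; rewrite -cA -cB; apply/eq_genmx/eqmxP. Qed.

Lemma rank_cap3 (A V B : 'M[F]_n) : (B <= V)%MS ->
  \rank ((A :&: V) :&: B)%MS = \rank (A :&: B)%MS.
Proof.
move=> sBV; rewrite -capmxA; apply/eqmx_rank/andP; split; apply: capmxS => //.
  exact: capmxSr.
by rewrite sub_capmx sBV submx_refl.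
Qed.

Lemma rank_cap_subl (A B : 'M[F]_n) : (A <= B)%MS -> \rank (A :&: B)%MS = \rank A.
Proof. by move/capmx_idPl => ->. Qed.

Lemma eq_sub_rank (A B : 'M[F]_n) : (A <= B)%MS -> \rank A = \rank B -> (A == B)%MS.
Proof. by move=> sAB rAB; rewrite -(mxrank_leqif_eq sAB).2 rAB. Qed.

Lemma rsum_col k L (M : 'M[nat]_(k, L)) (beta : 'I_L -> nat) j :
  (forall j, \sum_(i < k) M i j = beta j)%N -> rsum M k j = psum beta j.
Proof.
move=> hcol; rewrite /rsum sum_full exchange_big /psum; apply: eq_bigr => j' _.
exact: hcol.
Qed.

Lemma flag_count k : forall l (beta : 'I_l -> nat) (alpha : 'I_k -> nat)
  (M : 'M[nat]_(k, l)) (E : 'I_k.+1 -> 'M[F]_n),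
  (forall i : 'I_k.+1, \rank (E i) = psum alpha i) ->
  (forall i : 'I_k, (E (inord i) <= E (inord i.+1))%MS) ->
  (forall i, \sum_(j < l) M i j = alpha i)%N ->
  (forall j, \sum_(i < k) M i j = beta j)%N ->
  #|[pred Fl : {ffun 'I_l.+1 -> 'M[F]_n} | is_flag beta Fl && has_relpos E Fl M]|%:R
  = formula F alpha M.
Proof.
elim=> [|l IH] beta alpha M E hE hEE hrow hcol.
  rewrite (@eq_card1 _ [ffun => 0]) => [|Fl].
    rewrite /formula.
    have -> : (\sum_(i < k) \sum_(i' < k | (i' <= i)%N)
            \sum_(j < 0) \sum_(j' < 0 | (j < j')%N) M i j * M i' j')%N = 0%N.
      by apply: big1 => i _; apply: big1 => i' _; rewrite big_ord0.
    rewrite big1 => [|i _]; last by rewrite -hrow big_ord0 /qfact big_geq.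
    rewrite big1 => [|i _]; last by rewrite big_ord0.
    by rewrite expr0 !mul1r.
  rewrite unfold_in /=; apply/idP/idP.
    move=> /andP [/flagP [H1 _] _]; have [c0 r0] := H1 0%N (leq0n 0).
    rewrite psum0 in r0; move/eqP: r0; rewrite mxrank_eq0 => /eqP r0.
    apply/eqP/ffunP => j; rewrite ffunE; rewrite (ord1 j) -r0; congr (Fl _).
    by apply: val_inj; rewrite /= inordK.
  move=> /eqP ->; apply/andP; split.
    apply/flagP; split => [j|j //]; rewrite leqn0 => /eqP ->.
    by rewrite ffunE genmx0 mxrank0 psum0.
  apply/relposP => i j ik jl; rewrite ffunE capmx0 mxrank0 /rsum.
  by rewrite big1 // => i' _; rewrite big_ord0.
set M' := \matrix_(i < k, j < l) M i (widen_ord (leqnSn l) j).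
set a' := fun i : 'I_k => (\sum_(j < l) M' i j)%N.
set d := fun x : nat => (\sum_(i' < k | (i' < x)%N) a' i')%N.
set E' := fun x : nat => E (inord x).
set beta' := fun j : 'I_l => beta (widen_ord (leqnSn l) j).
have hEE' : forall i, (i < k)%N -> (E' i <= E' i.+1)%MS.
  by move=> i ik; exact: (hEE (Ordinal ik)).
have hEch := chain_le hEE'.
have hrE' : forall i, (i <= k)%N -> \rank (E' i) = (\sum_(i' < k | (i' < i)%N) alpha i')%N.
  by move=> i ik; rewrite /E' hE /psum inordK.
have ha' : forall i, a' i = (\sum_(j' < l.+1 | (j' < l)%N) M i j')%N.
  by move=> i; rewrite sum_widen // sum_full /a'; apply: eq_bigr => j _; rewrite /M' mxE.
have hd : forall i, (i < k)%N -> (d i <= d i.+1)%N.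
  by move=> i ik; rewrite /d (psumS (Ordinal ik)) leq_addr.
have cnt := count_cell (E := E') (d := d) (k := k).
rewrite -sum1_card (partition_big (fun Fl : {ffun 'I_l.+2 -> 'M[F]_n} => Fl (inord l)) (cellset E' d k)) /=; last first.
  move=> Fl /andP [/flagP [H1 H2] /relposP HR].
  have [cV rV] := H1 l (leqnSn l).
  rewrite cV eqxx andTb; apply/andP; split.
    apply: cap_rank_sub; rewrite rV (HR k l (leqnn k) (leqnSn l)).
    exact: rsum_col.
  apply/cellP => i ik; rewrite (HR i l ik (leqnSn l)) /rsum /d.
  by apply: eq_bigr => i' _; rewrite ha'.
rewrite natr_sum (eq_bigr (fun _ => formula F a' M')); last first.
  move=> V /and3P [/eqP cV sVE /cellP hV].
  set E'' := fun i : 'I_k.+1 => (E i :&: V)%MS.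
  have hE'' : forall i : 'I_k.+1, \rank (E'' i) = psum a' i.
    by move=> i; change (\rank (E i :&: V)%MS = d i); rewrite -(hV i (ltn_ord i)) /E' inord_val.
  have hEE'' : forall i : 'I_k, (E'' (inord i) <= E'' (inord i.+1))%MS.
    by move=> i; rewrite /E''; apply: capmxS => //; exact: hEE.
  have hcol' : forall j : 'I_l, (\sum_(i < k) M' i j)%N = beta' j.
    by move=> j; rewrite /beta' -hcol; apply: eq_bigr => i _; rewrite /M' mxE.
  rewrite -(IH beta' a' M' E'' hE'' hEE'' (fun i => erefl) hcol') sum1_card.
  congr (_ %:R).
  have rVd : \rank V = d k by rewrite -(hV k (leqnn k)) rank_cap_sub.
  have dk : d k = rsum M k l.
    by rewrite /d /rsum; apply: eq_bigr => i' _; rewrite ha'.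
  have hEk : E' k = E ord_max by rewrite /E'; congr (E _); apply: val_inj; rewrite /= inordK.
  have rsumW : forall i j, (j <= l)%N -> rsum M i j = rsum M' i j.
    move=> i j jl; rewrite /rsum; apply: eq_bigr => i' _; rewrite sum_widen //.
    by apply: eq_bigr => j' _; rewrite /M' mxE.
  have psumW : forall j, (j <= l)%N -> psum beta j = psum beta' j.
    by move=> j jl; rewrite /psum sum_widen.
  have hsum : psum beta l.+1 = \rank (E' k).
    rewrite hrE' // -(rsum_col l.+1 hcol) /rsum sum_full.
    by rewrite sum_full; apply: eq_bigr => i _; rewrite sum_full hrow.
  pose res := fun Fl : {ffun 'I_l.+2 -> 'M[F]_n} =>
    [ffun j : 'I_l.+1 => Fl (widen_ord (leqnSn _) j)].
  pose ext := fun G : {ffun 'I_l.+1 -> 'M[F]_n} =>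
    [ffun j : 'I_l.+2 => if j == ord_max then <<E ord_max>>%MS else G (inord j)].
  have resN : forall Fl j, (j <= l)%N -> res Fl (inord j) = Fl (inord j).
    move=> Fl j jl; rewrite ffunE; congr (Fl _); apply: val_inj.
    by rewrite /= !inordK // ltnS // leqW.
  have extN : forall G j, (j <= l)%N -> ext G (inord j) = G (inord j).
    move=> G j jl; rewrite ffunE.
    have -> : (inord j == ord_max :> 'I_l.+2) = false.
      by apply/negbTE; rewrite -val_eqE /= inordK ?ltnS ?leqW // neq_ltn ltnS jl.
    by congr (G _); apply: val_inj; rewrite /= !inordK // ltnS // leqW.
  have extT : forall G, ext G (inord l.+1) = <<E ord_max>>%MS.
    move=> G; rewrite ffunE.
    have -> : (inord l.+1 == ord_max :> 'I_l.+2) by rewrite -val_eqE /= inordK.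
    by [].
  have eT : (inord l.+1 : 'I_l.+2) = ord_max by apply: val_inj; rewrite /= inordK.
  have factB : forall Fl : {ffun 'I_l.+2 -> 'M[F]_n},
      (is_flag beta Fl && has_relpos E Fl M) && (Fl (inord l) == V) -> ext (res Fl) = Fl.
    move=> Fl /andP [/andP [/flagP [H1 H2] /relposP HR] /eqP FlV].
    apply/ffunP => j; rewrite ffunE.
    case: eqP => [->|jn].
      have [cT rT] := H1 l.+1 (leqnn _); rewrite eT in cT rT.
      have sub : (Fl ord_max <= E' k)%MS.
        apply: cap_rank_sub; rewrite rT -eT (HR k l.+1 (leqnn k) (leqnn _)).
        exact: rsum_col.
      have eq : (Fl ord_max == E' k)%MS by apply: eq_sub_rank sub _; rewrite rT hsum.
      rewrite -hEk -[RHS]cT; apply/eq_genmx; apply: eqmx_sym; apply/eqmxP; exact: eq.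
    have jl : (j <= l)%N.
      have := ltn_ord j; rewrite ltnS leq_eqVlt => /orP [/eqP h|//].
      by exfalso; apply: jn; apply: val_inj.
    by rewrite resN //; congr (Fl _); apply: val_inj; rewrite /= inordK.
  have factA : forall Fl : {ffun 'I_l.+2 -> 'M[F]_n},
      (is_flag beta Fl && has_relpos E Fl M) && (Fl (inord l) == V) ->
      is_flag beta' (res Fl) && has_relpos E'' (res Fl) M'.
    move=> Fl /andP [/andP [/flagP [H1 H2] /relposP HR] /eqP FlV].
    have chF := chain_le (E := fun j => Fl (inord j)) H2.
    apply/andP; split.
      apply/flagP; split => [j jl|j jl].
        rewrite resN //; have [c r] := H1 j (leqW jl); by rewrite -psumW.
      rewrite !resN //; [exact: H2 j (ltnW jl)| exact: ltnW].
    apply/relposP => i j ik jl; rewrite resN // /E''.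
    rewrite rank_cap3; first by rewrite HR ?rsumW // leqW.
    by rewrite -FlV; apply: chF => //; exact: leqW.
  have factC : forall G : {ffun 'I_l.+1 -> 'M[F]_n},
      is_flag beta' G && has_relpos E'' G M' ->
      (is_flag beta (ext G) && has_relpos E (ext G) M) && (ext G (inord l) == V).
    move=> G /andP [/flagP [H1 H2] /relposP HR].
    have chG := chain_le (E := fun j => G (inord j)) H2.
    have GlV : G (inord l) = V.
      have [cG rG] := H1 l (leqnn l).
      have h := HR k l (leqnn k) (leqnn l).
      have rGl : \rank (G (inord l)) = rsum M k l by rewrite rG -psumW // (rsum_col l hcol).
      have sGl : (G (inord l) <= V)%MS.
        apply: submx_trans (capmxSr (E (inord k)) V).
        by apply: cap_rank_sub; rewrite /E'' in h; rewrite h -rsumW // rGl.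
      apply: canon_eq => //; apply: eq_sub_rank sGl _; rewrite rGl rVd dk //.
    apply/andP; split; last by rewrite extN // GlV eqxx.
    apply/andP; split.
      apply/flagP; split => [j jl|j jl].
        move: jl; rewrite leq_eqVlt => /orP [/eqP ->|jl].
          by rewrite extT genmx_id mxrank_gen -hEk hsum.
        rewrite extN //; have [c r] := H1 j jl; by rewrite psumW.
      move: jl; rewrite ltnS leq_eqVlt => /orP [/eqP ->|jl].
        by rewrite extN // extT GlV genmxE -hEk.
      by rewrite !extN //; [exact: H2 j jl| exact: ltnW].
    apply/relposP => i j ik; rewrite leq_eqVlt => /orP [/eqP ->|jl].
      rewrite extT capmxC (rank_capl_eq _ (gen_eq _)) capmxC rank_cap_subl; last first.
        by rewrite -hEk; apply: hEch.
      rewrite -/(E' i) hrE' // /rsum; apply: eq_bigr => i' _.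
      by rewrite sum_full hrow.
    rewrite extN // -(rank_cap3 _ (B := G (inord j)) (V := V)); last first.
      by rewrite -GlV; apply: chG.
    by rewrite rsumW // -HR.
  have resext : forall G, res (ext G) = G.
    move=> G; apply/ffunP => j; rewrite !ffunE.
    have -> : (widen_ord (leqnSn l.+1) j == ord_max) = false.
      by apply/negbTE; rewrite -val_eqE /= neq_ltn ltn_ord.
    by congr (G _); apply: val_inj; rewrite /= inordK.
  transitivity #|[set res Fl | Fl in [pred Fl : {ffun 'I_l.+2 -> 'M[F]_n} |
      (is_flag beta Fl && has_relpos E Fl M) && (Fl (inord l) == V)]]|.
    symmetry; apply: card_in_imset => F1 F2 h1 h2 e.
    by rewrite -(factB _ h1) -(factB _ h2) e.
  apply: eq_card => G; apply/imsetP/idP => [[Fl hFl ->]|hG]; first exact: factA.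
  by exists (ext G); [exact: factC | rewrite resext].
rewrite sumr_const -mulr_natl.
change (#|cellset E' d k|%:R * formula F a' M' = formula F alpha M).
rewrite cnt //; last 2 first.
- by rewrite hrE' // big_pred0.
- by rewrite /d big_pred0.
rewrite (formula_step F hrow) /=; congr (_ * _).
apply: eq_bigr => i _; rewrite !hrE' //; last exact: ltnW.
Qed.

End Flags.

Unset Implicit Arguments.

Theorem corollary4p29 (F : finFieldType) (n k l : nat)
  (alpha : 'I_k -> nat) (beta : 'I_l -> nat) (M : 'M[nat]_(k, l))
  (halpha : (\sum_(i < k) alpha i)%N = n)
  (hbeta : (\sum_(j < l) beta j)%N = n)
  (hrow : forall i : 'I_k, (\sum_(j < l) M i j)%N = alpha i)
  (hcol : forall j : 'I_l, (\sum_(i < k) M i j)%N = beta j) :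
  let Q : rat := #|F|%:R in
  let q : rat := Q^-1 in
  (#|[pred Fl : {ffun 'I_l.+1 -> 'M[F]_n} |
       is_flag beta Fl && has_relpos (std_flag F n alpha) Fl M]|)%:R
  = Q ^+ (\sum_(i < k) \sum_(i' < k | (i' <= i)%N)
            \sum_(j < l) \sum_(j' < l | (j < j')%N) M i j * M i' j')%N
    * (\prod_(i < k) qfact q (alpha i))
    / (\prod_(i < k) \prod_(j < l) qfact q (M i j)).
Proof.
move=> Q q.
have hle : forall x, (psum alpha x <= n)%N.
  move=> x; rewrite /psum big_mkcond -halpha /=; apply: leq_sum => i' _.
  by case: ifP.
apply: (flag_count (E := std_flag F n alpha)) => //.
- by move=> i; rewrite /std_flag rank_pid_mx.
- move=> i; rewrite /std_flag.
  have hab : (psum alpha (@inord k i) <= psum alpha (@inord k i.+1))%N.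
    rewrite /psum !inordK ?ltnS ?(ltnW (ltn_ord i)) //.
    by rewrite (psumS i) leq_addr.
  apply/submxP; exists (pid_mx (psum alpha (@inord k i))).
  by rewrite mul_pid_mx (minn_idPl hab) pid_mx_minv.
Qed.
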